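(* Let $\mathcal{V}$ be a pseudo-variety of $\mathbb{M}$-algebras such that every language recognised by an algebra in $\mathcal{V}$ has a syntactic algebra, and let $\mathcal{K}$ be a variety of languages such that every language in $\mathcal{K}$ has a syntactic algebra. The following statements are equivalent: (1) $\mathcal{K}$ consists of those languages that are recognised by some algebra in $\mathcal{V}$; (2) $\mathcal{K}$ consists of all languages $K$ with $\mathrm{Syn}(K)\in\mathcal{V}$; (3) $\mathcal{V}$ consists of those finitary algebras that only recognise languages in $\mathcal{K}$; (4) $\mathcal{V}$ is the pseudo-variety generated by the set $\{\mathrm{Syn}(K):K\in\mathcal{K}\}$.
   Context: Fix a set $\Xi$ of sorts; $\mathsf{Pos}^\Xi$: $\Xi$-sorted families of partial orders with sort-wise monotone maps. $\mathbb{M}$ is a monad on $\mathsf{Pos}^\Xi$ ($\mathrm{flat},\mathrm{sing}$) preserving injective, surjective, bijective functions and preimages and using the standard ordering (order on $\mathbb{M}A$ is $\{(\mathbb{M}p(u),\mathbb{M}q(u)):u\in\mathbb{M}R\}$, $R$ the order of $A$). $\mathbb{M}$-algebras $\langle A,\pi\rangle$: $\pi\circ\mathbb{M}\pi=\pi\circ\mathrm{flat}$, $\pi\circ\mathrm{sing}=\mathrm{id}$; morphisms commute with products. Finitary: sort-wise finite and finitely generated. Quotient of $\mathfrak{B}$: codomain of a surjective morphism from $\mathfrak{B}$. For $\Delta\subseteq\Xi$: $A|_\Delta$ the part with sorts in $\Delta$, $\mathbb{M}|_\Delta A:=(\mathbb{M}(A|_\Delta))|_\Delta$, $\mathfrak{A}|_\Delta$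 the $\mathbb{M}|_\Delta$-algebra on $A|_\Delta$ with restricted product. $\mathfrak{B}$ is a sort-accumulation point of $\mathcal{A}$ if for every finite $\Delta\subseteq\Xi$ there is $\mathfrak{A}\in\mathcal{A}$ with $\mathfrak{B}|_\Delta$ a quotient of $\mathfrak{A}|_\Delta$. A pseudo-variety is a class of finitary algebras closed under quotients, finitary subalgebras of finite products and sort-accumulation points; the pseudo-variety generated by a set is the smallest one containing it. An alphabet is a finite unordered set $\Sigma$; a language is $K\subseteq\mathbb{M}_\xi\Sigma$; $\mathfrak{A}$ recognises $K$ if $K=\varphi^{-1}[P]$ for a morphism $\varphi:\mathbb{M}\Sigma\to\mathfrak{A}$ and upwards closed $P\subseteq A_\xi$. Contexts with hole of sort $\zeta$: $p\in\mathbb{M}(\Sigma+\{\Box\})$; $p[s]$ the image of $p$ under the algebra morphism extending $\Box\mapsto s$, $c\mapsto\mathrm{sing}(c)$; $p^{-1}[K]=\{s:p[s]\in K\}$. Syntactic congruence $s\preceq_K t$ ($s,t$ of sort $\zeta$) iff $p[s]\in K\Rightarrow p[t]\in K$ for all contexts $p\in\mathbb{M}_\xi(\Sigma+\{\Box\})$ with hole of sort $\zeta$. $K$ has a syntactic algebra if $\preceq_K$ is a congruence ordering ($\mathbb{M}q(s)\leq\mathbb{M}q(t)\Rightarrow\pi(s)\preceq_K\pi(t)$, $q$ the quotient map onto the ordered set of classes) with sort-wise finite quotient; $\mathrm{Syn}(K)=\mathbb{M}\Sigma/{\preceq_K}$. A variety of languages is a family $\mathcal{K}$ assigning to each alphabet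 $\Sigma$ a class $\mathcal{K}[\Sigma]$ of languages over $\Sigma$ closed under finite unions and intersections, inverse morphisms ($\psi^{-1}[K]$ for algebra morphisms $\psi:\mathbb{M}\Sigma\to\mathbb{M}\Gamma$) and derivatives $p^{-1}[K]$; ''$K\in\mathcal{K}$'' means $K\in\mathcal{K}[\Sigma]$ for some alphabet $\Sigma$. *)

(* Defs.v *)
From mathcomp Require Import all_boot.
From Stdlib Require ProofIrrelevance List.
Set Implicit Arguments. Unset Strict Implicit. Unset Printing Implicit Defensive.

Section SortedPos.
Variable Xi : Type.

Record SPos := {
  car :> Xi -> Type;
  le : forall x, car x -> car x -> Prop;
  le_refl : forall x (a : car x), le a a;
  le_trans : forall x (a b c : car x), le a b -> le b c -> le a c;
  le_anti : forall x (a b : car x), le a b -> le b a -> a = b }.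

Record PosHom (A B : SPos) := {
  hfun :> forall x, A x -> B x;
  hmono : forall x (a b : A x), le a b -> le (hfun a) (hfun b) }.

Definition idH (A : SPos) : PosHom A A :=
  @Build_PosHom A A (fun x a => a) (fun x a b h => h).

Definition compH (A B C : SPos) (g : PosHom B C) (f : PosHom A B) : PosHom A C :=
  @Build_PosHom A C (fun x a => g x (f x a))
    (fun x a b h => hmono g (hmono f h)).

Section Sub.
Variables (A : SPos) (P : forall x, A x -> Prop).
Definition sub_car (x : Xi) := {a : A x | P a}.
Definition sub_le (x : Xi) (a b : sub_car x) := le (proj1_sig a) (proj1_sig b).
Lemma sub_le_refl x (a : sub_car x) : sub_le a a.
Proof. exact: le_refl. Qed.
Lemma sub_le_trans x (a b c : sub_car x) : sub_le a b -> sub_le b c -> sub_le a c.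
Proof. exact: le_trans. Qed.
Lemma sub_le_anti x (a b : sub_car x) : sub_le a b -> sub_le b a -> a = b.
Proof.
case: a b => [a Ha] [b Hb]; rewrite /sub_le /= => h1 h2.
have E := le_anti h1 h2; subst b; by rewrite (ProofIrrelevance.proof_irrelevance _ Ha Hb).
Qed.
Definition Sub : SPos := Build_SPos sub_le_refl sub_le_trans sub_le_anti.
Definition incl : PosHom Sub A :=
  @Build_PosHom Sub A (fun x a => proj1_sig a) (fun x a b h => h).
End Sub.

Section Sq.
Variable A : SPos.
Definition sq_car (x : Xi) := (A x * A x)%type.
Definition sq_le (x : Xi) (a b : sq_car x) := le a.1 b.1 /\ le a.2 b.2.
Lemma sq_le_refl x (a : sq_car x) : sq_le a a.
Proof. by split; apply: le_refl. Qed.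
Lemma sq_le_trans x (a b c : sq_car x) : sq_le a b -> sq_le b c -> sq_le a c.
Proof. by case=> h1 h2 [h3 h4]; split; apply: le_trans; eassumption. Qed.
Lemma sq_le_anti x (a b : sq_car x) : sq_le a b -> sq_le b a -> a = b.
Proof.
case: a b => [a1 a2] [b1 b2] [/= h1 h2] [/= h3 h4].
by rewrite (le_anti h1 h3) (le_anti h2 h4).
Qed.
Definition Sq : SPos := Build_SPos sq_le_refl sq_le_trans sq_le_anti.
Definition OrdRel : SPos := Sub (fun x (ab : Sq x) => le ab.1 ab.2).
Definition relp : PosHom OrdRel A :=
  @Build_PosHom OrdRel A (fun x ab => (proj1_sig ab).1)
    (fun x a b h => proj1 h).
Definition relq : PosHom OrdRel A :=
  @Build_PosHom OrdRel A (fun x ab => (proj1_sig ab).2)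
    (fun x a b h => proj2 h).
End Sq.

Record Monad := {
  M : SPos -> SPos;
  Mmap : forall A B, PosHom A B -> PosHom (M A) (M B);
  sing : forall A, PosHom A (M A);
  flat : forall A, PosHom (M (M A)) (M A);
  Mmap_ext : forall A B (f g : PosHom A B), (forall x a, f x a = g x a) ->
               forall x u, Mmap f x u = Mmap g x u;
  Mmap_id : forall A x u, Mmap (idH A) x u = u;
  Mmap_comp : forall A B C (f : PosHom A B) (g : PosHom B C) x u,
      Mmap (compH g f) x u = Mmap g x (Mmap f x u);
  sing_nat : forall A B (f : PosHom A B) x a,
      Mmap f x (sing A x a) = sing B x (f x a);
  flat_nat : forall A B (f : PosHom A B) x u,
      Mmap f x (flat A x u) = flat B x (Mmap (Mmap f) x u);
  flat_sing : forall A x u, flat A x (sing (M A) x u) = u;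
  flat_Msing : forall A x u, flat A x (Mmap (sing A) x u) = u;
  flat_flat : forall A x u,
      flat A x (flat (M A) x u) = flat A x (Mmap (flat A) x u);
  pres_inj : forall A B (f : PosHom A B), (forall x, injective (f x)) ->
      forall x, injective (Mmap f x);
  pres_surj : forall A B (f : PosHom A B),
      (forall x (b : B x), exists a, f x a = b) ->
      forall x (v : M B x), exists u, Mmap f x u = v;
  pres_bij : forall A B (f : PosHom A B), (forall x, bijective (f x)) ->
      forall x, bijective (Mmap f x);
  (* M preserves preimages: M(f^-1[C]) = (Mf)^-1[MC] (as subsets of MA) *)
  pres_preim : forall A B (f : PosHom A B) (C : forall x, B x -> Prop) x
      (u : M A x),
      (exists w : M (Sub C) x, Mmap (incl C) x w = Mmap f x u) <->
      (exists v : M (Sub (fun y (a : A y) => C y (f y a))) x,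
          Mmap (incl _) x v = u);
  std_order : forall A x (u v : M A x),
      le u v <-> exists w : M (OrdRel A) x,
                   Mmap (relp A) x w = u /\ Mmap (relq A) x w = v }.

Section Algebras.
Variable T : Monad.
Local Notation M := (M T).
Local Notation Mmap := (Mmap T).
Local Notation flat := (flat T).
Local Notation sing := (sing T).

Record Alg := {
  acar :> SPos;
  aprod : PosHom (M acar) acar;
  alg_assoc : forall x u, aprod x (Mmap aprod x u) = aprod x (flat _ x u);
  alg_unit : forall x a, aprod x (sing _ x a) = a }.

Record Hom (A B : Alg) := {
  hpos :> PosHom A B;
  hcomm : forall x u, hpos x (aprod A x u) = aprod B x (Mmap hpos x u) }.

Definition Surj (A B : SPos) (f : PosHom A B) :=
  forall x (b : B x), exists a, f x a = b.

Lemma free_assoc (A : SPos) x u :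
  flat A x (Mmap (flat A) x u) = flat A x (flat (M A) x u).
Proof. by rewrite flat_flat. Qed.
Definition FreeAlg (A : SPos) : Alg :=
  @Build_Alg (M A) (flat A) (@free_assoc A) (fun x a => flat_sing a).

Definition SortFinite (A : SPos) :=
  forall x, exists l : list (A x), forall a, List.In a l.

Definition SubClosed (A : Alg) (C : forall x, A x -> Prop) :=
  forall x (u : M (Sub C) x), C x (aprod A x (Mmap (incl C) x u)).

Definition FinGen (A : Alg) :=
  exists G : list {x : Xi & A x},
    forall C : forall x, A x -> Prop, SubClosed C ->
      (forall g, List.In g G -> C (projT1 g) (projT2 g)) ->
      forall x a, C x a.

Definition Finitary (A : Alg) := SortFinite A /\ FinGen A.

Definition QuotientOf (A B : Alg) := exists h : Hom A B, Surj h.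

(* B|_Delta is a quotient of A|_Delta (as M|_Delta-algebras), Delta = [set x | In x D] *)
Definition Restr (A : SPos) (D : list Xi) : SPos := Sub (fun x (_ : A x) => List.In x D).

Definition RestrQuotientOf (D : list Xi) (A B : Alg) :=
  exists h : PosHom (Restr A D) (Restr B D),
    Surj h /\
    forall x (d : List.In x D) (u : M (Restr A D) x),
      proj1_sig (h x (exist _ (aprod A x (Mmap (incl _) x u)) d)) =
      aprod B x (Mmap (incl _) x (Mmap h x u)).

Definition SortAccPoint (V : Alg -> Prop) (B : Alg) :=
  forall D : list Xi, exists A, V A /\ RestrQuotientOf D A B.

(* B is (isomorphic to) a subalgebra of the finite product of the F i:
   a family of morphisms f i : B -> F i that is jointly an order embedding *)
Definition SubOfFinProd (V : Alg -> Prop) (B : Alg) :=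
  exists (I : finType) (F : I -> Alg) (f : forall i, Hom B (F i)),
    (forall i, V (F i)) /\
    forall x (a b : B x), le a b <-> (forall i, le (f i x a) (f i x b)).

Definition PseudoVariety (V : Alg -> Prop) :=
  (forall A, V A -> Finitary A) /\
  (forall A B, V A -> QuotientOf A B -> V B) /\
  (forall B, Finitary B -> SubOfFinProd V B -> V B) /\
  (forall B, Finitary B -> SortAccPoint V B -> V B).

Definition GeneratedPV (S : Alg -> Prop) (A : Alg) :=
  forall V, PseudoVariety V -> (forall B, S B -> V B) -> V A.

Record Alphabet := { asym : finType; asort : asym -> Xi }.

Definition apos_car (S : Alphabet) (x : Xi) := {a : asym S | asort a = x}.
Definition APos (S : Alphabet) : SPos :=
  @Build_SPos (apos_car S) (fun x a b => a = b)
    (fun x a => erefl) (fun x a b c h1 h2 => etrans h1 h2)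
    (fun x a b h _ => h).

Definition MS (S : Alphabet) := FreeAlg (APos S).

Definition Language (S : Alphabet) (xi : Xi) := M (APos S) xi -> Prop.

Definition Recognises (A : Alg) (S : Alphabet) (xi : Xi) (K : Language S xi) :=
  exists (phi : Hom (MS S) A) (P : A xi -> Prop),
    (forall a b, P a -> le a b -> P b) /\
    forall s, K s <-> P (phi xi s).

(* Sigma + {Box}, Box of sort zeta *)
Definition AddHole (S : Alphabet) (zeta : Xi) : Alphabet :=
  {| asym := option (asym S);
     asort := fun o => match o with Some a => asort a | None => zeta end |}.

Section Plug.
Variables (S : Alphabet) (zeta : Xi) (s : M (APos S) zeta).
Definition plug_fun (x : Xi) (o : APos (AddHole S zeta) x) : M (APos S) x :=
  match o with
  | exist a h =>
    (match a as a0 return @asort (AddHole S zeta) a0 = x -> M (APos S) x with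
     | Some b => fun h => sing (APos S) x (exist _ b h)
     | None => fun h => eq_rect zeta (fun y => M (APos S) y) s x h
     end) h
  end.
Lemma plug_mono x (a b : APos (AddHole S zeta) x) :
  le a b -> le (plug_fun a) (plug_fun b).
Proof. by move=> /= ->; apply: le_refl. Qed.
Definition plug_hom : PosHom (APos (AddHole S zeta)) (M (APos S)) :=
  Build_PosHom plug_mono.
(* p[s] : image of p under the algebra morphism extending Box |-> s, c |-> sing c *)
Definition plug (xi : Xi) (p : M (APos (AddHole S zeta)) xi) : M (APos S) xi :=
  flat _ xi (Mmap plug_hom xi p).
End Plug.

Definition SynLe (S : Alphabet) (xi : Xi) (K : Language S xi) (zeta : Xi)
  (s t : M (APos S) zeta) :=
  forall p : M (APos (AddHole S zeta)) xi, K (plug s p) -> K (plug t p).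

(* K has a syntactic algebra: <=_K is a congruence ordering whose quotient
   (the ordered set of classes, B with quotient map q) is sort-wise finite *)
Definition HasSynAlg (S : Alphabet) (xi : Xi) (K : Language S xi) :=
  exists (B : SPos) (q : PosHom (M (APos S)) B),
    Surj q /\
    (forall x (s t : M (APos S) x), le (q x s) (q x t) <-> SynLe K s t) /\
    SortFinite B /\
    (forall x (s t : M (M (APos S)) x),
        le (Mmap q x s) (Mmap q x t) -> SynLe K (flat _ x s) (flat _ x t)).

(* B is (a copy of) Syn(K) = M Sigma / <=_K with the induced algebra structure *)
Definition IsSyn (S : Alphabet) (xi : Xi) (K : Language S xi) (B : Alg) :=
  exists q : Hom (MS S) B,
    Surj q /\ forall x (s t : M (APos S) x), le (q x s) (q x t) <-> SynLe K s t.

Definition LangClass := forall (S : Alphabet) (xi : Xi), Language S xi -> Prop.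

Definition LangVariety (KK : LangClass) :=
  (forall S xi, KK S xi (fun _ => False)) /\
  (forall S xi, KK S xi (fun _ => True)) /\
  (forall S xi (K L : Language S xi),
      KK S xi K -> KK S xi L -> KK S xi (fun s => K s \/ L s)) /\
  (forall S xi (K L : Language S xi),
      KK S xi K -> KK S xi L -> KK S xi (fun s => K s /\ L s)) /\
  (forall S G (psi : Hom (MS S) (MS G)) xi (K : Language G xi),
      KK G xi K -> KK S xi (fun s => K (psi xi s))) /\
  (forall S xi zeta (K : Language S xi) (p : M (APos (AddHole S zeta)) xi),
      KK S xi K -> KK S zeta (fun s => K (plug s p))).

End Algebras.
End SortedPos.

(* Main.v *)
Require Import Defs.
From mathcomp Require Import all_boot.
From Stdlib Require Import ProofIrrelevance FunctionalExtensionality PropExtensionality ClassicalEpsilon Classical.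
Set Implicit Arguments. Unset Strict Implicit. Unset Printing Implicit Defensive.

Section Gen.
Variable Xi : Type.
Variable T : Monad Xi.
Local Notation MM := (M T).
Local Notation Mm := (Mmap T).

Lemma Mmap_comp2 (A B C : SPos Xi) (f : PosHom A B) (g : PosHom B C) (h : PosHom A C) :
  (forall x a, g x (f x a) = h x a) -> forall x u, Mm g x (Mm f x u) = Mm h x u.
Proof. move=> H x u; rewrite -Mmap_comp; apply: Mmap_ext => y a /=; exact: H. Qed.

Lemma Mmap_ext2 (A B : SPos Xi) (f g : PosHom A B) :
  (forall x a, f x a = g x a) -> forall x u, Mm f x u = Mm g x u.
Proof. exact: Mmap_ext. Qed.

Section Mono.
Variables (A B : SPos Xi) (f g : PosHom A B).
Hypothesis H : forall x a, le (f x a) (g x a).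
Definition pairF x (a : A x) : OrdRel B x := exist _ (f x a, g x a) (H a).
Lemma pairF_mono x (a b : A x) : le a b -> le (pairF a) (pairF b).
Proof. by move=> h; split; apply: hmono. Qed.
Definition pairH : PosHom A (OrdRel B) := Build_PosHom pairF_mono.
Lemma Mmap_mono x u : le (Mm f x u) (Mm g x u).
Proof.
apply/std_order; exists (Mm pairH x u); split; apply: Mmap_comp2 => //.
Qed.
End Mono.

Lemma sub_eq (A : SPos Xi) (P : forall x, A x -> Prop) x (a b : Defs.Sub P x) :
  proj1_sig a = proj1_sig b -> a = b.
Proof.
case: a b => [a Ha] [b Hb] /= E; subst b; by rewrite (proof_irrelevance _ Ha Hb).
Qed.

Section Ext.
Variables (S : SPos Xi) (B : Alg T) (g : PosHom S B).
Lemma ext_comm x (u : MM (FreeAlg T S) x) :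
  compH (aprod B) (Mm g) x (aprod (FreeAlg T S) x u) =
  aprod B x (Mm (compH (aprod B) (Mm g)) x u).
Proof.
rewrite /= flat_nat -alg_assoc; congr (aprod B x _).
by rewrite Mmap_comp.
Qed.
Definition ext : Hom (FreeAlg T S) B := Build_Hom ext_comm.
Lemma ext_sing x a : ext x (sing T S x a) = g x a.
Proof. by rewrite /= sing_nat alg_unit. Qed.
End Ext.

Lemma hom_free_unique (S : SPos Xi) (B : Alg T) (h1 h2 : Hom (FreeAlg T S) B) :
  (forall x a, h1 x (sing T S x a) = h2 x (sing T S x a)) ->
  forall x u, h1 x u = h2 x u.
Proof.
move=> H x u; rewrite -(flat_Msing u).
have E1 := hcomm h1 (Mm (sing T S) x u).
have E2 := hcomm h2 (Mm (sing T S) x u).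
rewrite /= in E1 E2; rewrite E1 E2; congr (aprod B x _).
rewrite -!Mmap_comp; apply: Mmap_ext => y a /=; exact: H.
Qed.

Section CompHom.
Variables (A B C : Alg T) (g : Hom B C) (f : Hom A B).
Lemma compHom_comm x u : compH g f x (aprod A x u) = aprod C x (Mm (compH g f) x u).
Proof. by rewrite /= hcomm hcomm Mmap_comp. Qed.
Definition compHom : Hom A C := Build_Hom compHom_comm.
End CompHom.

Definition mkAPosHom (S : Alphabet Xi) (B : SPos Xi) (f : forall y, APos S y -> B y) :
  PosHom (APos S) B.
Proof. refine (@Build_PosHom _ _ _ f _) => y a b /= ->; exact: le_refl. Defined.

Section SubAlg.
Variables (A : Alg T) (C : forall x, A x -> Prop) (hC : SubClosed C).
Definition subprod_f x (u : MM (Defs.Sub C) x) : Defs.Sub C x :=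
  exist _ (aprod A x (Mm (incl C) x u)) (hC u).
Lemma subprod_mono x (u v : MM (Defs.Sub C) x) : le u v -> le (subprod_f u) (subprod_f v).
Proof. move=> h; rewrite /le /= /sub_le /=; apply: hmono; exact: hmono. Qed.
Definition subprod : PosHom (MM (Defs.Sub C)) (Defs.Sub C) := Build_PosHom subprod_mono.
Lemma subalg_assoc x u : subprod x (Mm subprod x u) = subprod x (flat T _ x u).
Proof.
apply: sub_eq => /=.
rewrite (Mmap_comp2 (h := compH (aprod A) (Mm (incl C)))) //.
rewrite Mmap_comp alg_assoc -flat_nat //.
Qed.
Lemma subalg_unit x a : subprod x (sing T _ x a) = a.
Proof. apply: sub_eq => /=; by rewrite sing_nat alg_unit. Qed.
Definition SubAlg : Alg T := Build_Alg subalg_assoc subalg_unit.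
Lemma inclHom_comm x (u : MM SubAlg x) :
  incl C x (aprod SubAlg x u) = aprod A x (Mm (incl C) x u).
Proof. by []. Qed.
Definition inclHom : Hom SubAlg A := Build_Hom inclHom_comm.
End SubAlg.

Section Img.
Variables (C P : Alg T) (h : Hom C P).
Definition ImP x (p : P x) := exists c, h x c = p.
Definition cor_f x (c : C x) : Defs.Sub ImP x := exist _ (h x c) (ex_intro _ c erefl).
Lemma cor_mono x (a b : C x) : le a b -> le (cor_f a) (cor_f b).
Proof. exact: hmono. Qed.
Definition corH : PosHom C (Defs.Sub ImP) := Build_PosHom cor_mono.
Lemma corH_surj : Surj corH.
Proof. move=> x [p [c E]]; exists c; apply: sub_eq => /=; exact: E. Qed.
Lemma img_closed : SubClosed ImP.
Proof.
move=> x u; have [w Ew] := pres_surj corH_surj u.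
rewrite -Ew (Mmap_comp2 (h := h)) //; exists (aprod C x w); exact: hcomm.
Qed.
Definition ImgAlg := SubAlg img_closed.
Lemma corHom_comm x (u : MM C x) :
  corH x (aprod C x u) = aprod ImgAlg x (Mm corH x u).
Proof.
apply: sub_eq => /=; rewrite hcomm (Mmap_comp2 (h := h)) //.
Qed.
Definition corHom : Hom C ImgAlg := @Build_Hom _ _ C ImgAlg corH corHom_comm.
End Img.

Section Prod.
Variables (I : Type) (F : I -> SPos Xi).
Definition prod_car x := forall i, F i x.
Definition prod_le x (f g : prod_car x) := forall i, le (f i) (g i).
Lemma prod_le_refl x (f : prod_car x) : prod_le f f.
Proof. move=> i; exact: le_refl. Qed.
Lemma prod_le_trans x (f g h : prod_car x) : prod_le f g -> prod_le g h -> prod_le f h.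
Proof. move=> h1 h2 i; exact: le_trans (h1 i) (h2 i). Qed.
Lemma prod_le_anti x (f g : prod_car x) : prod_le f g -> prod_le g f -> f = g.
Proof. move=> h1 h2; apply: functional_extensionality_dep => i; exact: le_anti. Qed.
Definition ProdPos : SPos Xi := Build_SPos prod_le_refl prod_le_trans prod_le_anti.
Definition proj_f (i : I) x (f : ProdPos x) : F i x := f i.
Definition projH i : PosHom ProdPos (F i) := @Build_PosHom _ _ _ (@proj_f i) (fun x a b h => h i).
Definition tupleH (A : SPos Xi) (fs : forall i, PosHom A (F i)) : PosHom A ProdPos :=
  @Build_PosHom _ A ProdPos (fun x a i => fs i x a) (fun x a b h i => hmono (fs i) h).
End Prod.

Section ProdAlg.
Variables (I : Type) (F : I -> Alg T).
Definition PF i : SPos Xi := F i.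
Definition pprod_f x (u : MM (ProdPos PF) x) : ProdPos PF x :=
  fun i => aprod (F i) x (Mm (projH PF i) x u).
Lemma pprod_mono x (u v : MM (ProdPos PF) x) : le u v -> le (pprod_f u) (pprod_f v).
Proof. move=> h i; apply: hmono; exact: hmono. Qed.
Definition pprod := Build_PosHom pprod_mono.
Lemma palg_assoc x u : pprod x (Mm pprod x u) = pprod x (flat T _ x u).
Proof.
apply: functional_extensionality_dep => i /=; rewrite /pprod_f.
rewrite (Mmap_comp2 (h := compH (aprod (F i)) (Mm (projH PF i)))) //.
by rewrite Mmap_comp alg_assoc -flat_nat.
Qed.
Lemma palg_unit x a : pprod x (sing T _ x a) = a.
Proof.
apply: functional_extensionality_dep => i /=; rewrite /pprod_f sing_nat alg_unit //.
Qed.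
Definition ProdAlg : Alg T := Build_Alg palg_assoc palg_unit.
Definition projHom i : Hom ProdAlg (F i) := @Build_Hom _ _ ProdAlg (F i) (projH PF i) (fun x u => erefl).
Variables (A : Alg T) (hs : forall i, Hom A (F i)).
Lemma tupleHom_comm x u : tupleH (fun i => (hs i : PosHom A (PF i))) x (aprod A x u) =
   aprod ProdAlg x (Mm (tupleH (fun i => (hs i : PosHom A (PF i)))) x u).
Proof.
apply: functional_extensionality_dep => i /=; rewrite /pprod_f hcomm.
rewrite (Mmap_comp2 (h := hs i)) //.
Qed.
Definition tupleHom : Hom A ProdAlg := @Build_Hom _ _ A ProdAlg _ tupleHom_comm.
End ProdAlg.

End Gen.
Section Gen2.
Variable Xi : Type.
Variable T : Monad Xi.
Local Notation MM := (M T).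
Local Notation Mm := (Mmap T).

Section Quot.
Variables (C : Alg T) (B : SPos Xi) (q : PosHom C B) (qs : Surj q).
Hypothesis cong : forall x (s t : MM C x),
  le (Mm q x s) (Mm q x t) -> le (q x (aprod C x s)) (q x (aprod C x t)).
Definition pre x (v : MM B x) : MM C x :=
  proj1_sig (constructive_indefinite_description _ (pres_surj qs v)).
Lemma pre_spec x v : Mm q x (@pre x v) = v.
Proof. rewrite /pre; case: constructive_indefinite_description => //. Qed.
Definition qprod_f x (v : MM B x) : B x := q x (aprod C x (pre v)).
Lemma qprod_spec x w : qprod_f (Mm q x w) = q x (aprod C x w).
Proof. apply: le_anti; apply: cong; rewrite pre_spec; exact: le_refl. Qed.
Lemma qprod_mono x (v1 v2 : MM B x) : le v1 v2 -> le (qprod_f v1) (qprod_f v2).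
Proof. move=> h; apply: cong; by rewrite !pre_spec. Qed.
Definition qprod := Build_PosHom qprod_mono.
Lemma qalg_assoc x u : qprod x (Mm qprod x u) = qprod x (flat T _ x u).
Proof.
have qs2 : Surj (Mm q) by move=> y v; exact: (@pres_surj _ T _ _ q qs y v).
have [W <-] := pres_surj qs2 u.
rewrite /= (Mmap_comp2 (h := compH q (aprod C))); last by move=> y a; exact: qprod_spec.
rewrite Mmap_comp qprod_spec alg_assoc -flat_nat qprod_spec //.
Qed.
Lemma qalg_unit x a : qprod x (sing T _ x a) = a.
Proof. have [c <-] := qs a; by rewrite /= -sing_nat qprod_spec alg_unit. Qed.
Definition QuotAlg : Alg T := Build_Alg qalg_assoc qalg_unit.
Lemma qHom_comm x (u : MM C x) : q x (aprod C x u) = aprod QuotAlg x (Mm q x u).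
Proof. by rewrite /= qprod_spec. Qed.
Definition qHom : Hom C QuotAlg := @Build_Hom _ _ C QuotAlg q qHom_comm.
End Quot.

Lemma syn_exists (S : Alphabet Xi) xi (K : Language T S xi) :
  HasSynAlg K -> exists B : Alg T, IsSyn K B /\ SortFinite B.
Proof.
move=> [B [q [qs [qle [sf cong]]]]].
have cong' : forall x (s t : MM (MS T S) x), le (Mm q x s) (Mm q x t) ->
   le (q x (aprod (MS T S) x s)) (q x (aprod (MS T S) x t)).
  by move=> x s t h; apply/qle; exact: cong.
exists (@QuotAlg (MS T S) B q qs cong'); split => //; exists (@qHom (MS T S) B q qs cong'); split => //.
Qed.

Lemma factor_quot (C A B : Alg T) (phi : Hom C A) (q : Hom C B) :
  Surj phi -> Surj q ->
  (forall x (s t : C x), le (phi x s) (phi x t) -> le (q x s) (q x t)) ->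
  QuotientOf A B.
Proof.
move=> ps qs H.
pose pk x (a : A x) : C x := proj1_sig (constructive_indefinite_description _ (ps x a)).
have pkE : forall x a, phi x (pk x a) = a.
  by move=> x a; rewrite /pk; case: constructive_indefinite_description.
pose hf x (a : A x) : B x := q x (pk x a).
have hspec : forall x c, hf x (phi x c) = q x c.
  move=> x c; apply: le_anti; apply: H; rewrite pkE; exact: le_refl.
have hmono' : forall x (a b : A x), le a b -> le (hf x a) (hf x b).
  move=> x a b h; apply: H; by rewrite !pkE.
pose h := Build_PosHom hmono'.
have hc : forall x u, h x (aprod A x u) = aprod B x (Mm h x u).
  move=> x u; have [w <-] := pres_surj ps u.
  rewrite -hcomm /= hspec hcomm; congr (aprod B x _).
  by symmetry; apply: Mmap_comp2 => y a; exact: hspec.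
exists (Build_Hom hc) => x b; have [c <-] := qs x b; exists (phi x c); exact: hspec.
Qed.

Lemma SF_surj (A B : SPos Xi) (f : forall x, A x -> B x) :
  SortFinite A -> (forall x b, exists a, f x a = b) -> SortFinite B.
Proof.
move=> hA hf x; have [l hl] := hA x; exists (List.map (f x) l) => b.
have [a <-] := hf x b; exact: List.in_map.
Qed.

Lemma SF_sub (A : SPos Xi) (P : forall x, A x -> Prop) :
  SortFinite A -> SortFinite (Defs.Sub P).
Proof.
move=> hA x; have [l hl] := hA x.
suff [l' hl'] : exists l' : list (Defs.Sub P x), forall a : Defs.Sub P x,
    List.In (proj1_sig a) l -> List.In a l'.
  by exists l' => a; apply: hl'.
elim: l {hl} => [|a0 l [l' IH]]; first by exists nil.
case: (classic (P x a0)) => [p|np].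
- exists (exist _ a0 p :: l') => a /= [E|H]; last by right; exact: IH.
  by left; apply: sub_eq.
- exists l' => a /= [E|H]; last exact: IH.
  by case: np; rewrite E; exact: proj2_sig a.
Qed.

Lemma In_of_mem (U : eqType) (x : U) (s : seq U) : x \in s -> List.In x s.
Proof. elim: s => //= y s IH; rewrite in_cons => /orP [/eqP ->|h]; [by left|right; exact: IH]. Qed.

Section Upd.
Variables (I : eqType) (F : I -> Type).
Definition upd (g : forall i, F i) (j : I) (b : F j) : forall i, F i :=
  fun i => match j =P i with ReflectT e => eq_rect j F b i e | ReflectF _ => g i end.
Lemma upd_eq (g : forall i, F i) (j : I) (b : F j) : upd g b j = b.
Proof. rewrite /upd; case: eqP => [e|//]; by rewrite (eq_axiomK e). Qed.
Lemma upd_neq (g : forall i, F i) (j : I) (b : F j) (i : I) : j <> i -> upd g b i = g i.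
Proof. rewrite /upd; case: eqP => //. Qed.
End Upd.

Lemma SF_prod (I : finType) (F : I -> SPos Xi) :
  (forall i, SortFinite (F i)) -> SortFinite (ProdPos F).
Proof.
move=> hF x.
pose Li i := proj1_sig (constructive_indefinite_description _ (hF i x)).
have hLi : forall i b, List.In b (Li i) by move=> i; rewrite /Li; case: constructive_indefinite_description.
suff [L hL] : exists L : list (forall i, F i x), forall f : forall i, F i x,
    exists g, List.In g L /\ forall j, List.In j (enum I) -> g j = f j.
  exists L => f; have [g [gL E]] := hL f.
  have -> : f = g by apply: functional_extensionality_dep => j; rewrite E //; apply: In_of_mem; rewrite mem_enum.
  exact: gL.
elim: (enum I) => [|j js [L IH]].
- case: (classic (exists f0 : forall i, F i x, True)) => [[f0 _]|nf].
  + by exists (f0 :: nil) => f; exists f0; split => //; left.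
  + by exists nil => f; case: nf; exists f.
- exists (List.flat_map (fun g => List.map (fun b => upd g b) (Li j)) L) => f.
  have [g [gL E]] := IH f.
  exists (upd g (f j)); split.
  + apply/List.in_flat_map; exists g; split => //; apply: List.in_map; exact: hLi.
  + move=> k /= [<-|kin]; first by rewrite upd_eq.
    case: (j =P k) => [<-|ne]; first by rewrite upd_eq.
    by rewrite upd_neq // E.
Qed.

Lemma FG_surj (S : Alphabet Xi) (A : Alg T) (h : Hom (MS T S) A) :
  Surj h -> FinGen A.
Proof.
move=> hs.
pose gen (a : asym S) : {x : Xi & A x} :=
  existT _ (asort a) (h _ (sing T (APos S) (asort a) (exist _ a erefl))).
exists (List.map gen (enum (asym S))) => C hC hG.
have inG : forall y (o : APos S y), C y (h y (sing T _ y o)).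
  move=> y [a e]; subst y.
  apply: (hG (gen a)); apply: List.in_map; apply: In_of_mem; by rewrite mem_enum.
pose gf y (o : APos S y) : Defs.Sub C y := exist _ _ (inG y o).
have gm : forall y (a b : APos S y), le a b -> le (gf y a) (gf y b).
  by move=> y a b /= ->; exact: le_refl.
pose g := Build_PosHom gm.
move=> x a; have [s <-] := hs x a.
have := hC x (Mm g x s).
have -> : Mm (incl C) x (Mm g x s) = Mm h x (Mm (sing T _) x s).
  by rewrite (Mmap_comp2 (h := compH h (sing T _))) // Mmap_comp.
by rewrite -hcomm /= flat_Msing.
Qed.

Lemma lift_hom (S : Alphabet Xi) (A B : Alg T) (h : Hom A B) (chi : Hom (MS T S) B) :
  Surj h -> exists psi : Hom (MS T S) A, forall x t, h x (psi x t) = chi x t.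
Proof.
move=> hs.
pose g y (o : APos S y) : A y :=
  proj1_sig (constructive_indefinite_description _ (hs y (chi y (sing T _ y o)))).
have gE : forall y o, h y (g y o) = chi y (sing T _ y o).
  by move=> y o; rewrite /g; case: constructive_indefinite_description.
exists (ext (mkAPosHom g)) => x t.
have := hom_free_unique (h1 := compHom h (ext (mkAPosHom g))) (h2 := chi).
apply => y a /=; rewrite sing_nat alg_unit; exact: gE.
Qed.

End Gen2.
Section Lang.
Variable Xi : Type.
Variable T : Monad Xi.
Local Notation MM := (M T).
Local Notation Mm := (Mmap T).

Definition hole (S : Alphabet Xi) (xi : Xi) : MM (APos (AddHole S xi)) xi :=
  sing T (APos (AddHole S xi)) xi
    (exist (fun a : asym (AddHole S xi) => asort a = xi) None erefl).

Lemma plug_hole (S : Alphabet Xi) xi (s : MM (APos S) xi) : plug s (hole S xi) = s.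
Proof. by rewrite /plug /hole sing_nat flat_sing. Qed.

Lemma syn_recog (S : Alphabet Xi) xi (K : Language T S xi) (B : Alg T) :
  IsSyn K B -> Recognises B K.
Proof.
move=> [q [qs qle]].
exists q, (fun b => exists s, K s /\ le (q xi s) b); split.
  by move=> a b [s [Ks h]] h2; exists s; split => //; exact: le_trans h h2.
move=> s; split; first by move=> Ks; exists s; split => //; exact: le_refl.
move=> [s0 [Ks0 h]]; have := (proj1 (qle _ _ _) h) (hole S xi).
by rewrite !plug_hole; apply.
Qed.

Lemma hom_plug_mono (S : Alphabet Xi) (A : Alg T) (phi : Hom (MS T S) A) zeta
   (s t : MM (APos S) zeta) xi (p : MM (APos (AddHole S zeta)) xi) :
  le (phi zeta s) (phi zeta t) -> le (phi xi (plug s p)) (phi xi (plug t p)).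
Proof.
move=> h; rewrite /plug !(hcomm phi) /=.
apply: hmono.
rewrite (Mmap_comp2 (h := compH phi (plug_hom s))) //.
rewrite (Mmap_comp2 (h := compH phi (plug_hom t))) //.
apply: Mmap_mono => y [[a|] e] /=; first exact: le_refl.
by case: y / e.
Qed.

Lemma syn_divides (V : Alg T -> Prop) (hV : PseudoVariety V)
  (S : Alphabet Xi) xi (K : Language T S xi) (A B : Alg T) :
  V A -> Recognises A K -> IsSyn K B -> V B.
Proof.
move=> VA [phi [P [Pup HK]]] [q [qs qle]].
case: hV => [hfin [hquot [hsub hacc]]].
have VA' : V (ImgAlg phi).
  apply: hsub.
    split; first by apply: SF_sub; case: (hfin _ VA).
    apply: (FG_surj (h := corHom phi)); exact: corH_surj.
  exists (unit : finType), (fun _ => A), (fun _ => inclHom (@img_closed _ _ _ _ phi)); split => //.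
  move=> x a b; split; [by move=> h _| by apply].
apply: (hquot _ _ VA').
apply: (factor_quot (phi := corHom phi) (q := q)); [exact: corH_surj | exact: qs |].
move=> x s t h; apply/qle => p.
rewrite !HK => H1; apply: (Pup _ _ H1); exact: hom_plug_mono.
Qed.

Lemma KK_ext (KK : LangClass T) (S : Alphabet Xi) xi (K1 K2 : Language T S xi) :
  KK S xi K1 -> (forall s, K1 s <-> K2 s) -> KK S xi K2.
Proof.
move=> h E; have -> : K2 = K1; last done.
apply: functional_extensionality => s; apply: propositional_extensionality; by split => /E.
Qed.

Lemma syn_rec_KK (KK : LangClass T) (hKK : LangVariety KK)
  (S : Alphabet Xi) xi (K : Language T S xi) (B : Alg T) :
  KK S xi K -> IsSyn K B -> SortFinite B ->
  forall (G : Alphabet Xi) xi' (L : Language T G xi'), Recognises B L -> KK G xi' L.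
Proof.
move=> hK [q [qs qle]] sf G xi' L [chi [P [Pup HL]]].
case: hKK => [h0 [h1 [hor [hand [hinv hder]]]]].
have [psi Hpsi] := lift_hom (h := q) chi qs.
suff KP : KK S xi' (fun s => P (q xi' s)).
  apply: (KK_ext (hinv _ _ psi _ _ KP)) => t; by rewrite HL -Hpsi.
have [lB hlB] := sf xi'.
have Ub : forall b : B xi', KK S xi' (fun s => le b (q xi' s)).
  move=> b; have [s0 Es0] := qs xi' b.
  have step : forall c : B xi', exists Lc : Language T S xi', KK S xi' Lc /\
      (forall s, le b (q xi' s) -> Lc s) /\ (~ le b c -> forall s, q xi' s = c -> ~ Lc s).
    move=> c; case: (classic (le b c)) => [bc|nbc].
      exists (fun _ => True); split; first exact: h1.
      by split => // /(_ bc).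
    have [tc Etc] := qs xi' c.
    have : ~ SynLe K s0 tc by move/qle; rewrite Es0 Etc.
    move=> nS; have [p np] := not_all_ex_not _ _ nS.
    have [Kp nKp] := imply_to_and _ _ np.
    exists (fun s => K (plug s p)); split; first exact: hder.
    split.
      move=> s h; rewrite -Es0 in h; exact: (proj1 (qle _ _ _) h p Kp).
    move=> _ s Es Ks; apply: nKp; apply: (proj1 (qle _ _ _) _ p Ks).
    rewrite Es Etc; exact: le_refl.
  have [Lx [KLx [L1 L2]]] : exists Lx : Language T S xi', KK S xi' Lx /\
      (forall s, le b (q xi' s) -> Lx s) /\
      (forall s, List.In (q xi' s) lB -> ~ le b (q xi' s) -> ~ Lx s).
    elim: lB {hlB} => [|c l [Lx [KLx [L1 L2]]]].
      by exists (fun _ => True); split; [exact: h1| split].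
    have [Lc [KLc [Lc1 Lc2]]] := step c.
    exists (fun s => Lx s /\ Lc s); split; first exact: hand.
    split; first by move=> s h; split; [exact: L1|exact: Lc1].
    move=> s /= [E|I] nb [Ls Lcs]; last exact: (L2 s I nb Ls).
    by subst c; exact: (Lc2 nb s erefl Lcs).
  apply: (KK_ext KLx) => s; split; last exact: L1.
  move=> Ls; apply: NNPP => nb; exact: (L2 s (hlB _) nb Ls).
have [Lx [KLx HLl]] : exists Lx : Language T S xi', KK S xi' Lx /\
    forall s, Lx s <-> exists b, List.In b lB /\ P b /\ le b (q xi' s).
  elim: lB {hlB} => [|b l [Lx [KLx HLl]]].
    exists (fun _ => False); split; first exact: h0.
    by move=> s; split => // [[b [[] _]]].
  case: (classic (P b)) => [Pb|nPb].
    exists (fun s => Lx s \/ le b (q xi' s)); split; first exact: hor.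
    move=> s; split.
      case=> [/HLl [b' [I [Pb' h]]]|h]; first by exists b'; split => //; right.
      by exists b; split => //; left.
    move=> [b' [[E|I] [Pb' h]]]; first by subst b'; right.
    by left; apply/HLl; exists b'.
  exists Lx; split => // s; split.
    by move=> /HLl [b' [I [Pb' h]]]; exists b'; split => //; right.
  move=> [b' [[E|I] [Pb' h]]]; first by subst b'.
  by apply/HLl; exists b'.
apply: (KK_ext KLx) => s; split.
  by move=> /HLl [b [_ [Pb h]]]; exact: Pup h.
by move=> Pq; apply/HLl; exists (q xi' s); split => //; split => //; exact: le_refl.
Qed.

End Lang.
Section EL.
Variable Xi : Type.
Variable T : Monad Xi.
Local Notation MM := (M T).
Local Notation Mm := (Mmap T).

Lemma In_nth_ex (U : Type) (t : U) (l : list U) :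
  List.In t l -> exists n, n < size l /\ nth t l n = t.
Proof.
elim: l => //= a l IH [E|I]; first by exists 0.
have [n [hn E]] := IH I; by exists n.+1.
Qed.

Lemma In_tnth (U : Type) (t : U) (l : list U) :
  List.In t l -> exists i : 'I_(size l), tnth (in_tuple l) i = t.
Proof.
move=> hI; have [n [hn E]] := In_nth_ex hI; exists (Ordinal hn); by rewrite (tnth_nth t).
Qed.

Definition GAlph (A : SPos Xi) (Gs : list {x : Xi & A x}) : Alphabet Xi :=
  {| asym := ('I_(size Gs) : finType); asort := fun i => projT1 (tnth (in_tuple Gs) i) |}.

Definition gAlph (A : SPos Xi) (Gs : list {x : Xi & A x}) y (o : APos (GAlph Gs) y) : A y :=
  match o with exist i e => eq_rect _ A (projT2 (tnth (in_tuple Gs) i)) y e end.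

Lemma fin_gen_surj (A : Alg T) : FinGen A ->
  exists (S : Alphabet Xi) (phi : Hom (MS T S) A), Surj phi.
Proof.
move=> [Gs hGs].
exists (GAlph Gs), (ext (mkAPosHom (@gAlph A Gs))).
move=> x a; apply: (hGs (ImP (ext (mkAPosHom (@gAlph A Gs))))).
  exact: img_closed.
move=> t hI; have [i E] := In_tnth hI; subst t.
exists (sing T (APos (GAlph Gs)) _ (exist (fun j : asym (GAlph Gs) => asort j = _) i erefl)).
by rewrite ext_sing.
Qed.

Lemma KK_bigand (KK : LangClass T) (hKK : LangVariety KK) (S : Alphabet Xi) xi
  (X : Type) (l : list X) (Lf : X -> Language T S xi) :
  (forall x, List.In x l -> KK S xi (Lf x)) -> KK S xi (fun s => forall x, List.In x l -> Lf x s).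
Proof.
case: hKK => [h0 [h1 [hor [hand _]]]].
elim: l => [|a l IH] H.
  apply: (KK_ext (h1 S xi)) => s; split => // _ x [].
have K1 := hand _ _ _ _ (H a (or_introl erefl)) (IH (fun x I => H x (or_intror I))).
apply: (KK_ext K1) => s; split.
  by move=> [h2 h3] x [<-|I] //; exact: h3.
by move=> h; split; [apply: h; left | move=> x I; apply: h; right].
Qed.

Lemma KK_bigor (KK : LangClass T) (hKK : LangVariety KK) (S : Alphabet Xi) xi
  (X : Type) (l : list X) (Lf : X -> Language T S xi) :
  (forall x, List.In x l -> KK S xi (Lf x)) -> KK S xi (fun s => exists x, List.In x l /\ Lf x s).
Proof.
case: hKK => [h0 [h1 [hor [hand _]]]].
elim: l => [|a l IH] H.
  apply: (KK_ext (h0 S xi)) => s; split => // [[x [[] _]]].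
have K1 := hor _ _ _ _ (H a (or_introl erefl)) (IH (fun x I => H x (or_intror I))).
apply: (KK_ext K1) => s; split.
  by case=> [h|[x [I h]]]; [exists a; split => //; left | exists x; split => //; right].
by move=> [x [[<-|I] h]]; [left | right; exists x].
Qed.

Lemma restr_list (A : SPos Xi) (D : list Xi) : SortFinite A ->
  exists Lst : list {x : Xi & A x}, forall x, List.In x D -> forall a, List.In (existT _ x a) Lst.
Proof.
move=> sf; elim: D => [|x D [L IH]]; first by exists nil.
have [lx hx] := sf x.
exists (List.map (fun a => existT _ x a) lx ++ L)%list => y [E|I] a.
  subst y; apply: List.in_or_app; left; apply: List.in_map; exact: hx.
apply: List.in_or_app; right; exact: IH.
Qed.

Lemma EL (W : Alg T -> Prop) (hW : PseudoVariety W) (A : Alg T) :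
  Finitary A ->
  (forall S xi (K : Language T S xi), Recognises A K -> exists B, W B /\ Recognises B K) ->
  W A.
Proof.
move=> finA HR.
case: (hW) => [hfin [hquot [hsub hacc]]].
apply: hacc => // D.
have [S [phi phis]] := fin_gen_surj (proj2 finA).
have [Lst hLst] := restr_list D (proj1 finA).
pose I : finType := 'I_(size Lst).
pose tt_ (i : I) := tnth (in_tuple Lst) i.
have H : forall i : I, exists p : {B : Alg T & Hom (MS T S) B}, W (projT1 p) /\
    exists P : projT1 p (projT1 (tt_ i)) -> Prop, (forall a b, P a -> le a b -> P b) /\
     forall s, le (projT2 (tt_ i)) (phi _ s) <-> P (projT2 p _ s).
  move=> i.
  have [B [WB [psi [P [Pup HP]]]]] :=
    HR S (projT1 (tt_ i)) (fun s => le (projT2 (tt_ i)) (phi _ s))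
      (ex_intro _ phi (ex_intro _ (fun a => le (projT2 (tt_ i)) a)
        (conj (fun a b h1 h2 => le_trans h1 h2) (fun s => iff_refl _)))).
  by exists (existT _ B psi); split => //; exists P.
pose sel i := proj1_sig (constructive_indefinite_description _ (H i)).
have selP : forall i, W (projT1 (sel i)) /\
    exists P : projT1 (sel i) (projT1 (tt_ i)) -> Prop, (forall a b, P a -> le a b -> P b) /\
     forall s, le (projT2 (tt_ i)) (phi _ s) <-> P (projT2 (sel i) _ s).
  by move=> i; rewrite /sel; case: constructive_indefinite_description.
pose F i := projT1 (sel i).
pose Psi := tupleHom (F := F) (fun i => projT2 (sel i)).
have sep : forall t, List.In t Lst -> forall s u : MM (APos S) (projT1 t),
    le (Psi _ s) (Psi _ u) -> le (projT2 t) (phi _ s) -> le (projT2 t) (phi _ u).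
  move=> t hI; have [i E] := In_tnth hI; subst t => s u hsu.
  have [_ [P [Pup HP]]] := selP i.
  rewrite !HP => Ps; apply: (Pup _ _ Ps); exact: (hsu i).
have key : forall x, List.In x D -> forall s u : MM (APos S) x,
    le (Psi _ s) (Psi _ u) -> le (phi _ s) (phi _ u).
  move=> x xD s u h; exact: (sep (existT _ x (phi x s)) (hLst x xD _) s u h (le_refl _)).
exists (ImgAlg Psi); split.
  apply: hsub.
    split.
      apply: SF_sub; apply: SF_prod => i; exact: (proj1 (hfin _ (proj1 (selP i)))).
    apply: (FG_surj (h := corHom Psi)); exact: corH_surj.
  exists I, F, (fun i => compHom (projHom F i) (inclHom (@img_closed _ _ _ _ Psi))).
  by split => [i|x a b]; [exact: (proj1 (selP i)) | split].
pose pk x (a' : ImgAlg Psi x) : MM (APos S) x :=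
  proj1_sig (constructive_indefinite_description _ (proj2_sig a')).
have pkE : forall x a', Psi x (pk x a') = proj1_sig a'.
  by move=> x a'; rewrite /pk; case: constructive_indefinite_description.
pose hf x (r : Restr (ImgAlg Psi) D x) : Restr A D x :=
  exist _ (phi x (pk x (proj1_sig r))) (proj2_sig r).
have hm : forall x (r1 r2 : Restr (ImgAlg Psi) D x), le r1 r2 -> le (hf x r1) (hf x r2).
  move=> x [a1 d1] [a2 d2] h; apply: (key x d1).
  by rewrite !pkE.
pose h := Build_PosHom hm.
have hspec : forall x (d : List.In x D) s,
    proj1_sig (h x (exist _ (corH Psi x s) d)) = phi x s.
  move=> x d s; apply: le_anti; apply: (key x d); rewrite pkE; exact: le_refl.
exists h; split.
  move=> x [a d]; have [s Es] := phis x a.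
  exists (exist _ (corH Psi x s) d); apply: sub_eq; by rewrite hspec.
move=> x d u.
pose rf y (r : Restr (MS T S) D y) : Restr (ImgAlg Psi) D y :=
  exist _ (corH Psi y (proj1_sig r)) (proj2_sig r).
have rm : forall y (r1 r2 : Restr (MS T S) D y), le r1 r2 -> le (rf y r1) (rf y r2).
  move=> y r1 r2 hr; exact: (hmono (corH Psi) hr).
pose rho := Build_PosHom rm.
have rs : Surj rho.
  move=> y [a' dy]; have [s Es] := corH_surj a'.
  by exists (exist _ s dy); apply: sub_eq.
have [w <-] := pres_surj rs u.
have E1 : Mm (incl _) x (Mm rho x w) = Mm (corH Psi) x (Mm (incl _) x w).
  rewrite (Mmap_comp2 (h := compH (corH Psi) (incl _))) //.
  exact: Mmap_comp2.
rewrite E1.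
have E2 : aprod (ImgAlg Psi) x (Mm (corH Psi) x (Mm (incl _) x w)) =
   corH Psi x (flat T _ x (Mm (incl _) x w)) := esym (hcomm (corHom Psi) (Mm (incl _) x w)).
rewrite E2 hspec.
rewrite (Mmap_comp2 (h := compH h rho)) //.
rewrite (Mmap_comp2 (h := compH phi (incl _))); last first.
  move=> y [s dy] /=; exact: hspec.
by rewrite Mmap_comp -(hcomm phi).
Qed.

End EL.
Section W0.
Variable Xi : Type.
Variable T : Monad Xi.
Local Notation MM := (M T).
Local Notation Mm := (Mmap T).

Definition W0 (KK : LangClass T) (A : Alg T) :=
  Finitary A /\ forall (S : Alphabet Xi) xi (K : Language T S xi), Recognises A K -> KK S xi K.

Lemma W0_PV (KK : LangClass T) (hKK : LangVariety KK) : PseudoVariety (W0 KK).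
Proof.
split; first by move=> A [].
split.
  move=> A B [finA recA] [h hs]; split.
    split; first exact: (SF_surj (f := h) (proj1 finA) hs).
    have [S [phi phis]] := fin_gen_surj (proj2 finA).
    apply: (FG_surj (h := compHom h phi)) => x b.
    have [a <-] := hs x b; have [s <-] := phis x a; by exists s.
  move=> G xi L [chi [P [Pup HL]]].
  have [psi Hpsi] := lift_hom (h := h) chi hs.
  apply: recA; exists psi, (fun a => P (h _ a)); split.
    move=> a b Pa hab; exact: (Pup _ _ Pa (hmono h hab)).
  by move=> t; rewrite HL Hpsi.
split.
  move=> B finB [I [F [f [WF emb]]]]; split => // G xi L [chi [P [Pup HL]]].
  have [lB hlB] := proj1 finB xi.
  have Ub : forall b, KK G xi (fun t => le b (chi xi t)).
    move=> b.
    have K1 := KK_bigand hKK (l := enum I)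
      (Lf := fun i t => le (f i xi b) (f i xi (chi xi t))).
    apply: (KK_ext (K1 _)).
      move=> i _; apply: (proj2 (WF i)).
      exists (compHom (f i) chi), (fun a => le (f i xi b) a); split => //.
      move=> a c h1 h2; exact: le_trans h1 h2.
    move=> t; split.
      move=> H; apply/emb => i; apply: H; apply: In_of_mem; by rewrite mem_enum.
    by move=> /emb H i _; exact: H.
  have K2 := KK_bigor hKK (l := lB) (Lf := fun b t => P b /\ le b (chi xi t)).
  apply: (KK_ext (K2 _)).
    move=> b _; case: (classic (P b)) => [Pb|nPb].
      apply: (KK_ext (Ub b)) => t; split => // [[]] //.
    case: hKK => [h0 _]; apply: (KK_ext (h0 G xi)) => t; split => // [[]] //.
  move=> t; rewrite HL; split.
    by move=> [b [_ [Pb h]]]; exact: Pup h.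
  by move=> Pc; exists (chi xi t); split => //; split => //; exact: le_refl.
move=> B finB acc; split => // G xi L [chi [P [Pup HL]]].
pose D := (xi :: List.map (@asort _ G) (enum (asym G)))%list.
have dxi : List.In xi D by left.
have inD : forall y (o : APos G y), List.In y D.
  move=> y [g e]; subst y; right; apply: List.in_map; apply: In_of_mem; by rewrite mem_enum.
have [A [[finA recA] [h [hs hc]]]] := acc D.
pose gR y (o : APos G y) : Restr A D y := proj1_sig
  (constructive_indefinite_description _ (hs y (exist _ (chi y (sing T _ y o)) (inD y o)))).
have gRE : forall y o, proj1_sig (h y (gR y o)) = chi y (sing T _ y o).
  move=> y o; rewrite /gR; case: constructive_indefinite_description => r /= -> //.
pose gR' := mkAPosHom gR.
pose psi := ext (mkAPosHom (fun y o => proj1_sig (gR y o))).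
have claim : forall t, proj1_sig (h xi (exist _ (psi xi t) dxi)) = chi xi t.
  move=> t.
  have E : psi xi t = aprod A xi (Mm (incl _) xi (Mm gR' xi t)).
    rewrite /=; congr (aprod A xi _); symmetry; exact: Mmap_comp2.
  rewrite E hc.
  rewrite (Mmap_comp2 (h := compH h gR')) //.
  rewrite (Mmap_comp2 (h := compH chi (sing T _))); last by move=> y o; exact: gRE.
  rewrite Mmap_comp -(hcomm chi) /= flat_Msing //.
apply: recA; exists psi, (fun a => P (proj1_sig (h xi (exist _ a dxi)))); split.
  move=> a b Pa hab; apply: (Pup _ _ Pa).
  exact: (hmono h (x := xi) (a := exist _ a dxi) (b := exist _ b dxi) hab).
by move=> t; rewrite HL claim.
Qed.

Lemma syn_SF (S : Alphabet Xi) xi (K : Language T S xi) (B : Alg T) :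
  HasSynAlg K -> IsSyn K B -> SortFinite B.
Proof.
move=> hs [q [qs qle]].
have [B0 [[q0 [q0s q0le]] sf0]] := syn_exists hs.
have [h hsu] := factor_quot (phi := q0) (q := q) q0s qs
  (fun x s t h => proj2 (qle x s t) (proj1 (q0le x s t) h)).
exact: (SF_surj (f := h) sf0 hsu).
Qed.

Lemma syn_W0 (KK : LangClass T) (hKK : LangVariety KK) (S : Alphabet Xi) xi
  (K : Language T S xi) (B : Alg T) :
  KK S xi K -> HasSynAlg K -> IsSyn K B -> W0 KK B.
Proof.
move=> hK hs hB; split.
  split; first exact: (syn_SF hs hB).
  case: hB => [q [qs _]]; exact: (FG_surj (h := q)).
exact: (syn_rec_KK hKK hK hB (syn_SF hs hB)).
Qed.

End W0.

Theorem theorem5p11 (Xi : Type) (T : Monad Xi)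
  (V : Alg T -> Prop) (KK : LangClass T)
  (hV : PseudoVariety V)
  (hVsyn : forall (A : Alg T) (S : Alphabet Xi) (xi : Xi) (K : Language T S xi),
      V A -> Recognises A K -> HasSynAlg K)
  (hKK : LangVariety KK)
  (hKKsyn : forall (S : Alphabet Xi) (xi : Xi) (K : Language T S xi),
      KK S xi K -> HasSynAlg K) :
  let st1 := forall (S : Alphabet Xi) (xi : Xi) (K : Language T S xi),
      KK S xi K <-> exists A : Alg T, V A /\ Recognises A K in
  let st2 := forall (S : Alphabet Xi) (xi : Xi) (K : Language T S xi),
      KK S xi K <-> exists B : Alg T, IsSyn K B /\ V B in
  let st3 := forall A : Alg T,
      V A <-> (Finitary A /\
               forall (S : Alphabet Xi) (xi : Xi) (K : Language T S xi),
                 Recognises A K -> KK S xi K) in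
  let st4 := forall A : Alg T,
      V A <-> GeneratedPV
                (fun B : Alg T => exists (S : Alphabet Xi) (xi : Xi) (K : Language T S xi),
                    KK S xi K /\ IsSyn K B) A in
  (st1 <-> st2) /\ (st2 <-> st3) /\ (st3 <-> st4).
Proof.
move=> st1 st2 st3 st4.
have F1 : forall S xi (K : Language T S xi),
    (exists B, IsSyn K B /\ V B) -> exists A, V A /\ Recognises A K.
  by move=> S xi K [B [sB VB]]; exists B; split => //; exact: syn_recog.
have F2 : forall S xi (K : Language T S xi),
    (exists A, V A /\ Recognises A K) -> exists B, IsSyn K B /\ V B.
  move=> S xi K [A [VA rA]].
  have [B [sB _]] := syn_exists (hVsyn _ _ _ _ VA rA).
  by exists B; split => //; exact: (syn_divides hV VA rA sB).
have e12 : st1 <-> st2.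
  split=> H S xi K; rewrite H; split; [exact: F2|exact: F1|exact: F1|exact: F2].
have e13 : st1 <-> st3.
  split=> H.
    move=> A; split.
      move=> VA; split; first exact: (proj1 hV).
      by move=> S xi K rA; apply/H; exists A.
    move=> [finA recA]; apply: (EL hV finA) => S xi K rA.
    by apply/H; exact: recA rA.
  move=> S xi K; split.
    move=> hK; have hs := hKKsyn _ _ _ hK.
    have [B [sB sfB]] := syn_exists hs.
    exists B; split; last exact: syn_recog.
    apply/H; exact: (syn_W0 hKK hK hs sB).
  by move=> [A [VA rA]]; exact: (proj2 (proj1 (H A) VA) _ _ _ rA).
have e34 : st3 <-> st4.
  split=> H A.
    split.
      move=> VA W hW hgen; have [finA recA] := proj1 (H A) VA.
      apply: (EL hW finA) => S xi K rA.
      have hK := recA _ _ _ rA; have hs := hKKsyn _ _ _ hK.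
      have [B [sB _]] := syn_exists hs.
      exists B; split; last exact: syn_recog.
      by apply: hgen; exists S, xi, K.
    move=> gA; apply: (gA V hV) => B [S [xi [K [hK sB]]]].
    apply/H; exact: (syn_W0 hKK hK (hKKsyn _ _ _ hK) sB).
  split.
    move=> VA; apply: ((proj1 (H A) VA) (W0 KK) (W0_PV hKK)).
    move=> B [S [xi [K [hK sB]]]]; exact: (syn_W0 hKK hK (hKKsyn _ _ _ hK) sB).
  move=> [finA recA]; apply/H => W hW hgen.
  apply: (EL hW finA) => S xi K rA.
  have hK := recA _ _ _ rA; have hs := hKKsyn _ _ _ hK.
  have [B [sB _]] := syn_exists hs.
  exists B; split; last exact: syn_recog.
  by apply: hgen; exists S, xi, K.
split => //; split => //.
by rewrite e12 in e13 *; exact: e13.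
Qed.
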